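(* Let $\mathcal{S}(\vec{x},\vec{a})$ be a specification over $\vec{a}$, where $\vec{x}$ and $\vec{a}$ are disjoint lists of Boolean variables. Let $\alpha$ be any assignment of the variables $\vec{x}$. Then $\alpha$ can be extended to an assignment $\beta$ of $\vec{x},\vec{a}$ such that (1) $\beta$ satisfies $\mathcal{S}$, and (2) $\alpha(x)=\beta(x)$ for every $x\in\vec{x}$.
   Context: A literal over a Boolean variable $x$ is $x$ or $\bar{x}=1-x$. A pseudo-Boolean (PB) constraint is $C\doteq\sum_i a_i\ell_i\ge A$ with integer $a_i,A$ and literals $\ell_i$; its negation is $\neg C\doteq\sum_i a_i\bar{\ell}_i\ge \sum_i a_i-A+1$. A formula is a finite set (conjunction) of PB constraints. A substitution (witness) $\omega$ maps variables to $0$, $1$ or literals, extended by $\omega(\bar x)=\overline{\omega(x)}$, $\omega(0)=0$, $\omega(1)=1$; its support is $\mathrm{supp}(\omega)=\{x:\omega(x)\ne x\}$. $C{\upharpoonright}_\omega\doteq\sum_i a_i\omega(\ell_i)\ge A$, and $F{\upharpoonright}_\omega=\{C{\upharpoonright}_\omega : C\in F\}$. For formulas $F,G$, $F\vdash G$ means every constraint of $G$ can be derived from $F$ in the cutting planes proof system (a sound system, so every assignment satisfying $F$ satisfies $G$). A formula $\mathcal{S}(\vec x,\vec a)=\{C_1,\dots,C_n\}$ is a specification over $\vec a$ if there are substitutions $\omega_1,\dots,\omega_n$ with $\mathrm{supp}(\omega_i)\subseteq\vec a$ for all $i$ such that for each $i\in\{1,\dots,n\}$: $\{C_1,\dots,C_{i-1}\}\cup\{\neg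 C_i\}\vdash\{C_1{\upharpoonright}_{\omega_i},\dots,C_i{\upharpoonright}_{\omega_i}\}$ (for $i=1$ the left-hand side is just $\{\neg C_1\}$). *)

(* Defs.v *)
From Stdlib Require Import ZArith List Permutation.
Import ListNotations.
Open Scope Z_scope.

Set Implicit Arguments.

Section PB.
Variable V : Type.

Inductive lit : Type := Pos (v : V) | Neg (v : V).

Definition lit_var (l : lit) : V := match l with Pos v => v | Neg v => v end.
Definition lit_neg (l : lit) : lit := match l with Pos v => Neg v | Neg v => Pos v end.

(** A PB constraint  sum_i a_i l_i >= A  (integer coefficients, any sign). *)
Record pbc : Type := PBC { pb_terms : list (Z * lit); pb_deg : Z }.

Definition pbc_default : pbc := PBC [] 0.

Definition lit_val (beta : V -> bool) (l : lit) : Z :=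
  match l with
  | Pos v => if beta v then 1 else 0
  | Neg v => if beta v then 0 else 1
  end.

Definition lhs_val (beta : V -> bool) (ts : list (Z * lit)) : Z :=
  fold_right (fun t acc => fst t * lit_val beta (snd t) + acc) 0 ts.

Definition sat (beta : V -> bool) (C : pbc) : Prop :=
  lhs_val beta (pb_terms C) >= pb_deg C.

Definition coef_sum (ts : list (Z * lit)) : Z :=
  fold_right (fun t acc => fst t + acc) 0 ts.

Definition pb_neg (C : pbc) : pbc :=
  PBC (map (fun t => (fst t, lit_neg (snd t))) (pb_terms C))
      (coef_sum (pb_terms C) - pb_deg C + 1).

(** Ceiling of a / c for c > 0. *)
Definition zceil (a c : Z) : Z := - ((- a) / c).

Inductive norm_step : pbc -> pbc -> Prop :=
| NS_perm ts ts' A : Permutation ts ts' -> norm_step (PBC ts A) (PBC ts' A)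
| NS_merge a b l ts A :
    norm_step (PBC ((a, l) :: (b, l) :: ts) A) (PBC ((a + b, l) :: ts) A)
| NS_cancel a b l ts A :
    norm_step (PBC ((a, l) :: (b, lit_neg l) :: ts) A) (PBC ((a - b, l) :: ts) (A - b))
| NS_drop0 l ts A : norm_step (PBC ((0, l) :: ts) A) (PBC ts A).

Inductive cp_derivable (F : list pbc) : pbc -> Prop :=
| CP_axiom C : In C F -> cp_derivable F C
| CP_lit l : cp_derivable F (PBC [(1, l)] 0)
| CP_add C1 C2 :
    cp_derivable F C1 -> cp_derivable F C2 ->
    cp_derivable F (PBC (pb_terms C1 ++ pb_terms C2) (pb_deg C1 + pb_deg C2))
| CP_mul c C : 0 < c -> cp_derivable F C ->
    cp_derivable F (PBC (map (fun t => (c * fst t, snd t)) (pb_terms C)) (c * pb_deg C))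
| CP_div c C : 0 < c -> cp_derivable F C ->
    cp_derivable F (PBC (map (fun t => (zceil (fst t) c, snd t)) (pb_terms C))
                        (zceil (pb_deg C) c))
| CP_sat C : 0 <= pb_deg C -> (forall t, In t (pb_terms C) -> 0 <= fst t) ->
    cp_derivable F C ->
    cp_derivable F (PBC (map (fun t => (Z.min (fst t) (pb_deg C), snd t)) (pb_terms C))
                        (pb_deg C))
| CP_norm C C' : cp_derivable F C -> norm_step C C' -> cp_derivable F C'.

Definition derives (F G : list pbc) : Prop :=
  forall C, In C G -> cp_derivable F C.

Inductive sval : Type := SConst (b : bool) | SLit (l : lit).

Definition subst := V -> sval.

Definition sval_neg (s : sval) : sval :=
  match s with SConst b => SConst (negb b) | SLit l => SLit (lit_neg l) end.

Definition subst_lit (w : subst) (l : lit) : sval :=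
  match l with Pos v => w v | Neg v => sval_neg (w v) end.

Definition supp_in (w : subst) (as_ : list V) : Prop :=
  forall v, w v <> SLit (Pos v) -> In v as_.

(** C restricted by w:  sum a_i w(l_i) >= A, constants moved to the degree. *)
Definition restrict_terms (w : subst) (ts : list (Z * lit)) : list (Z * lit) :=
  flat_map (fun t => match subst_lit w (snd t) with
                     | SLit l' => [(fst t, l')]
                     | SConst _ => []
                     end) ts.

Definition restrict_const (w : subst) (ts : list (Z * lit)) : Z :=
  fold_right (fun t acc => match subst_lit w (snd t) with
                           | SConst true => fst t + acc
                           | _ => acc
                           end) 0 ts.

Definition restrict (w : subst) (C : pbc) : pbc :=
  PBC (restrict_terms w (pb_terms C)) (pb_deg C - restrict_const w (pb_terms C)).

(** S = [C_1; ...; C_n] is a specification over [as_] (0-indexed here):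
    witnesses w_i with supp(w_i) in as_ such that
    {C_1..C_(i-1)} u {not C_i} |- {C_1|w_i, ..., C_i|w_i}. *)
Definition is_specification (as_ : list V) (S : list pbc) : Prop :=
  exists ws : nat -> subst,
    (forall i, supp_in (ws i) as_) /\
    (forall i, (i < length S)%nat ->
       derives (firstn i S ++ [pb_neg (nth i S pbc_default)])
               (map (restrict (ws i)) (firstn (Datatypes.S i) S))).

End PB.

Arguments Pos {V} v.
Arguments Neg {V} v.
Arguments SConst {V} b.
Arguments SLit {V} l.

(* Main.v *)
Require Import Defs.
From Stdlib Require Import ZArith List Lia Permutation Classical.
Import ListNotations.
Open Scope Z_scope.

Section Aux.
Variable V : Type.

Lemma lv01 (b : V -> bool) l : lit_val b l = 0 \/ lit_val b l = 1.
Proof. destruct l; simpl; destruct (b v); auto. Qed.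

Lemma lv_neg (b : V -> bool) l : lit_val b (lit_neg l) = 1 - lit_val b l.
Proof. destruct l; simpl; destruct (b v); reflexivity. Qed.

Lemma lhs_app (b : V -> bool) l1 l2 : lhs_val b (l1 ++ l2) = lhs_val b l1 + lhs_val b l2.
Proof. induction l1; simpl; lia. Qed.

Lemma lhs_perm (b : V -> bool) ts ts' : Permutation ts ts' -> lhs_val b ts = lhs_val b ts'.
Proof. induction 1; simpl; lia. Qed.

Lemma lhs_mul (b : V -> bool) c ts :
  lhs_val b (map (fun t => (c * fst t, snd t)) ts) = c * lhs_val b ts.
Proof. induction ts; simpl; [lia|]. rewrite IHts. ring. Qed.

Lemma zceil_add a b c : 0 < c -> zceil a c + zceil b c >= zceil (a + b) c.
Proof.
  intros Hc. unfold zceil.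
  pose proof (Z.div_mod (-a) c ltac:(lia)).
  pose proof (Z.div_mod (-b) c ltac:(lia)).
  pose proof (Z.div_mod (-(a+b)) c ltac:(lia)).
  pose proof (Z.mod_pos_bound (-a) c Hc).
  pose proof (Z.mod_pos_bound (-b) c Hc).
  pose proof (Z.mod_pos_bound (-(a+b)) c Hc).
  nia.
Qed.

Lemma zceil_mono a b c : 0 < c -> a >= b -> zceil a c >= zceil b c.
Proof.
  intros Hc H. unfold zceil.
  assert ((-a)/c <= (-b)/c) by (apply Z.div_le_mono; [exact Hc | lia]). lia.
Qed.

Lemma zceil_0 c : zceil 0 c = 0.
Proof. unfold zceil. destruct c; reflexivity. Qed.

Lemma lhs_div (b : V -> bool) c ts : 0 < c ->
  lhs_val b (map (fun t => (zceil (fst t) c, snd t)) ts) >= zceil (lhs_val b ts) c.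
Proof.
  intros Hc. induction ts as [|[a l] ts IH]; simpl.
  - rewrite zceil_0; lia.
  - pose proof (zceil_add (a * lit_val b l) (lhs_val b ts) c Hc).
    destruct (lv01 b l) as [E|E]; rewrite E in *.
    + replace (a * 0 + lhs_val b ts) with (lhs_val b ts) by ring. rewrite Z.mul_0_r. lia.
    + rewrite !Z.mul_1_r in *. lia.
Qed.

Lemma lhs_nonneg (b : V -> bool) ts : (forall t, In t ts -> 0 <= fst t) -> 0 <= lhs_val b ts.
Proof.
  induction ts as [|[a l] ts IH]; simpl; intros H; [lia|].
  assert (0 <= a) by (apply (H (a,l)); auto).
  assert (0 <= lhs_val b ts) by (apply IH; auto).
  destruct (lv01 b l) as [E|E]; rewrite E; lia.
Qed.

Lemma lhs_min (b : V -> bool) A ts : 0 <= A -> (forall t, In t ts -> 0 <= fst t) ->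
  lhs_val b (map (fun t => (Z.min (fst t) A, snd t)) ts) >= Z.min (lhs_val b ts) A.
Proof.
  intros HA. induction ts as [|[a l] ts IH]; simpl; intros H; [lia|].
  assert (0 <= a) by (apply (H (a,l)); auto).
  assert (0 <= lhs_val b ts) by (apply lhs_nonneg; auto).
  specialize (IH ltac:(auto)).
  destruct (lv01 b l) as [E|E]; rewrite E; lia.
Qed.

Lemma norm_sound (b : V -> bool) C C' : norm_step C C' -> sat b C -> sat b C'.
Proof.
  unfold sat; destruct 1; simpl.
  - intros. rewrite <- (lhs_perm b ts ts' H); auto.
  - destruct (lv01 b l) as [E|E]; rewrite E; lia.
  - rewrite lv_neg. destruct (lv01 b l) as [E|E]; rewrite E; lia.
  - lia.
Qed.

Lemma cp_sound (b : V -> bool) F C : cp_derivable F C ->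
  (forall D, In D F -> sat b D) -> sat b C.
Proof.
  intros HC HF. induction HC; unfold sat in *; simpl in *.
  - apply HF; auto.
  - destruct (lv01 b l) as [E|E]; rewrite E; lia.
  - rewrite lhs_app; lia.
  - rewrite lhs_mul; nia.
  - pose proof (lhs_div b c (pb_terms C) H).
    pose proof (zceil_mono _ _ _ H IHHC). lia.
  - pose proof (lhs_min b (pb_deg C) (pb_terms C) H H0). lia.
  - exact (norm_sound b _ _ H IHHC).
Qed.

Lemma neg_sat (b : V -> bool) C : ~ sat b C -> sat b (pb_neg C).
Proof.
  unfold sat; destruct C as [ts A]; simpl. intros H.
  enough (lhs_val b (map (fun t => (fst t, lit_neg (snd t))) ts) = coef_sum ts - lhs_val b ts) by lia.
  clear. induction ts as [|[a l] ts IH]; simpl; [lia|]. rewrite IH, lv_neg. ring.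
Qed.

Definition lit_bool (b : V -> bool) (l : lit V) : bool :=
  match l with Pos u => b u | Neg u => negb (b u) end.

Definition comp (b : V -> bool) (w : subst V) : V -> bool :=
  fun v => match w v with SConst c => c | SLit l => lit_bool b l end.

Lemma lv_comp b w l : lit_val (comp b w) l =
  match subst_lit w l with SConst c => if c then 1 else 0 | SLit l' => lit_val b l' end.
Proof.
  unfold comp. destruct l; simpl; destruct (w v) as [c|[u|u]]; simpl;
  try destruct c; try destruct (b u); reflexivity.
Qed.

Lemma lhs_comp b w ts : lhs_val (comp b w) ts =
  lhs_val b (restrict_terms w ts) + restrict_const w ts.
Proof.
  induction ts as [|[a l] ts IH]; simpl; [reflexivity|].
  unfold restrict_terms in *. simpl. rewrite lhs_app, IH, lv_comp.
  destruct (subst_lit w l) as [[|]|l']; simpl; ring.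
Qed.

Lemma sat_comp b w C : sat b (restrict w C) -> sat (comp b w) C.
Proof.
  unfold sat, restrict; simpl. rewrite lhs_comp. lia.
Qed.

End Aux.
Arguments comp {V} b w v.

Theorem lemma1 (V : Type) (xs as_ : list V) (S : list (pbc V))
  (Hdisj : forall v, In v xs -> ~ In v as_)
  (Hvars : forall C, In C S -> forall t, In t (pb_terms C) ->
             In (lit_var (snd t)) xs \/ In (lit_var (snd t)) as_)
  (Hspec : is_specification as_ S)
  (alpha : V -> bool) :
  exists beta : V -> bool,
    (forall C, In C S -> sat beta C) /\
    (forall x, In x xs -> alpha x = beta x).
Proof.
  destruct Hspec as [ws [Hsupp Hder]].
  assert (Main : forall k, (k <= length S)%nat -> exists beta : V -> bool,
    (forall j, (j < k)%nat -> sat beta (nth j S (pbc_default V))) /\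
    (forall x, In x xs -> alpha x = beta x)).
  { induction k as [|k IH]; intros Hk.
    - exists alpha; split; [intros; lia | auto].
    - destruct (IH ltac:(lia)) as [beta [Hs Ha]].
      destruct (classic (sat beta (nth k S (pbc_default V)))) as [Hsk|Hsk].
      + exists beta; split; auto. intros j Hj.
        destruct (Nat.eq_dec j k); [subst; auto | apply Hs; lia].
      + exists (comp beta (ws k)). split.
        * intros j Hj. apply sat_comp.
          eapply cp_sound.
          -- apply (Hder k ltac:(lia)). apply in_map.
             assert (E : nth j (firstn (Datatypes.S k) S) (pbc_default V) = nth j S (pbc_default V))
               by (rewrite nth_firstn; destruct (Nat.ltb_spec j (Datatypes.S k)); [reflexivity|lia]).
             rewrite <- E. apply nth_In. rewrite length_firstn. lia.
          -- intros D HD. apply in_app_or in HD as [HD|HD].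
             ++ destruct (In_nth _ _ (pbc_default V) HD) as [j' [Hj' Ej']].
                rewrite length_firstn in Hj'. rewrite nth_firstn in Ej'.
                destruct (Nat.ltb_spec j' k); [|lia]. subst D. apply Hs; lia.
             ++ destruct HD as [HD|[]]. subst D. apply neg_sat; auto.
        * intros x Hx. rewrite Ha by auto. unfold comp.
          destruct (classic (ws k x = SLit (Pos x))) as [E|E].
          -- rewrite E. reflexivity.
          -- exfalso. exact (Hdisj x Hx (Hsupp k x E)). }
  destruct (Main (length S) (le_n _)) as [beta [Hs Ha]].
  exists beta; split; auto.
  intros C HC. destruct (In_nth _ _ (pbc_default V) HC) as [j [Hj Ej]].
  subst C. auto.
Qed.
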